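(* Assume $d_0\delta>2$, and let $\varepsilon_0=\frac{d_0}2-\frac1\delta>0$ and $t=\frac{d_0}{2}$. Let $G=(L\cup R,E)$ be a $(c,d,\alpha,\delta)$-bipartite expander with $L=[n]$, $C_0\subseteq\mathbb{F}_2^d$ a linear code of minimum distance $d_0$, and $x\in\mathbb{F}_2^n$, $y\in T(G,C_0)$ with $d_H(x,y)\le\alpha n$. Then there exists $q\in W\setminus\{0\}$ such that, with $x'=\mathsf{DeterFlip}(x,q)$, $|F(x',y)|\le\left(1-\frac{\varepsilon_0\delta}{2ct^2}\right)|F(x,y)|$.
   Context: A bipartite graph is $(c,d)$-regular if left degrees are $c$ and right degrees $d$; $N(S)$ is the neighborhood of $S$. A $(c,d,\alpha,\delta)$-bipartite expander ($\alpha,\delta\in(0,1]$) is a $(c,d)$-regular bipartite graph with $|N(S)|\ge\delta c|S|$ for all $S\subseteq L$, $|S|\le\alpha|L|$. Tanner code: $L=[n]$, for each $v\in R$ a fixed ordering of $N(v)$ defines $x_{N(v)}\in\mathbb{F}_2^d$, and $T(G,C_0)=\{x:x_{N(v)}\in C_0\ \forall v\in R\}$. $F(x,y)=\{i\in[n]:x_i\ne y_i\}$; $d_H$ is Hamming distance. $\mathsf{Decode}(z)$ is the codeword of $C_0$ closest to $z\in\mathbb{F}_2^d$, ties broken lexicographically. $W=\{\frac{i}{cd_0}:i\in\mathbb{Z},0\le i\le cd_0\}$. $\mathsf{DeterFlip}(x,q)$ for $q\in\mathbb{R}$: set $p_1=\dots=p_n=0$; for each $v\in R$, let $w_v=\mathsf{Decode}(x_{N(v)})$;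 if $1\le d_H(w_v,x_{N(v)})<t$, let $i$ be the smallest element of $N(v)$ where $w_v$ and $x_{N(v)}$ differ and increase $p_i$ by $\frac{t-d_H(w_v,x_{N(v)})}{ct}$; then flip every $x_i$ with $p_i=q$ and return the result. *)

(* Defs.v *)
(* Words over F_2 are represented as finite functions to bool
   (F_2 = bool with xor (+) as addition). *)
From mathcomp Require Import all_boot all_order all_algebra.
Set Implicit Arguments. Unset Strict Implicit. Unset Printing Implicit Defensive.
Import Order.TTheory GRing.Theory Num.Theory.
Local Open Scope ring_scope.

Definition word (k : nat) := {ffun 'I_k -> bool}.

Definition dH k (x y : word k) : nat := #|[set j | x j != y j]|.

Definition Fset k (x y : word k) : {set 'I_k} := [set i | x i != y i].

Definition wxor k (x y : word k) : word k := [ffun j => x j (+) y j].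
Definition zero_word k : word k := [ffun _ => false].

Definition linear_code k (C : {set word k}) : Prop :=
  zero_word k \in C /\ (forall x y, x \in C -> y \in C -> wxor x y \in C).

Definition min_distance k (C : {set word k}) (d0 : nat) : Prop :=
  (exists x y, [/\ x \in C, y \in C, x != y & dH x y = d0]) /\
  (forall x y, x \in C -> y \in C -> x != y -> (d0 <= dH x y)%N).

Definition lexlt k (x y : word k) : bool :=
  [exists j : 'I_k, ((x j : nat) < y j)%N &&
                    [forall j' : 'I_k, (j' < j)%N ==> (x j' == y j')]].
Definition lexle k (x y : word k) : bool := (x == y) || lexlt x y.

(* Decode(z): closest codeword of C to z, ties broken lexicographically
   (default 0 if C is empty, which never happens for a linear code) *)
Definition Decode k (C : {set word k}) (z : word k) : word k :=
  odflt (zero_word k)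
    [pick w in C | [forall w' in C,
        (dH z w < dH z w')%N || ((dH z w == dH z w') && lexle w w')]].

(* Bipartite graph with L = [n], R = [m]; N v is the fixed ordering of the
   neighbourhood of the right vertex v. *)
Section Graph.
Variables (n m d : nat) (N : 'I_m -> d.-tuple 'I_n).

Definition restrict (x : word n) (v : 'I_m) : word d :=
  [ffun j => x (tnth (N v) j)].

Definition regular (c : nat) : Prop :=
  (forall v, uniq (N v)) /\ (forall i : 'I_n, #|[set v | i \in N v]| = c).

Definition nbhd (S : {set 'I_n}) : {set 'I_m} :=
  [set v | [exists j, tnth (N v) j \in S]].

Definition expander (R : realFieldType) (c : nat) (alpha delta : R) : Prop :=
  [/\ regular c, 0 < alpha <= 1, 0 < delta <= 1 &
      forall S : {set 'I_n}, #|S|%:R <= alpha * n%:R ->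
        delta * c%:R * #|S|%:R <= (#|nbhd S|%:R : R)].

Definition tanner (C : {set word d}) : {set word n} :=
  [set x : word n | [forall v, restrict x v \in C]].

Definition DeterFlip (R : realFieldType) (c : nat) (t : R) (C : {set word d})
    (x : word n) (q : R) : word n :=
  let w v := Decode C (restrict x v) in
  let e v := dH (w v) (restrict x v) in
  let D v := [set i : 'I_n | [exists j, (tnth (N v) j == i) && (w v j != x i)]] in
  let first v := [pick i in D v | [forall i' in D v, (i <= i')%N]] in
  let p i := \sum_(v : 'I_m | (1 <= e v)%N && ((e v)%:R < t) && (first v == Some i))
               (t - (e v)%:R) / (c%:R * t) in
  [ffun i => if p i == q then ~~ x i else x i].

End Graph.

(* Main.v *)
Require Import Defs.
From mathcomp Require Import all_boot all_order all_algebra.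
From mathcomp Require Import ring lra.
Import Order.TTheory GRing.Theory Num.Theory.
Set Implicit Arguments. Unset Strict Implicit. Unset Printing Implicit Defensive.

Lemma fin_min (T : finType) (lt : rel T) :
  (forall a b c, lt a b -> lt b c -> lt a c) ->
  (forall a b, a != b -> lt a b || lt b a) ->
  forall A : {set T}, A != set0 ->
  exists2 mm, mm \in A & forall z, z \in A -> z != mm -> lt mm z.
Proof.
move=> Htr Htot A; have [k] := ubnP #|A|; elim: k A => // k IH A leA A0.
case/set0Pn: A0 => a aA.
have [E|NE] := eqVneq (A :\ a) set0.
  exists a => // z zA za.
  have : z \in A :\ a by rewrite !inE za zA.
  by rewrite E inE.
have lt' : (#|A :\ a| < k)%N.
  by rewrite (cardsD1 a A) aA add1n ltnS in leA.
have [mm mmA Hm] := IH _ lt' NE.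
move: mmA; rewrite !inE => /andP[mma mmA].
have := Htot _ _ mma; case/orP => H.
  exists mm => // z zA zm.
  have [->|za] := eqVneq z a; first by [].
  by apply: Hm => //; rewrite !inE za.
exists a => // z zA za.
have [->|zm] := eqVneq z mm; first by [].
by apply: Htr H (Hm _ _ _) => //; rewrite !inE za.
Qed.

Lemma dH_sym k (a b : word k) : dH a b = dH b a.
Proof. by rewrite /dH; apply: eq_card => j; rewrite !inE eq_sym. Qed.

Lemma dH_eq0 k (a b : word k) : dH a b = 0%N -> a = b.
Proof.
rewrite /dH => /eqP; rewrite cards_eq0 => /eqP E; apply/ffunP => j.
apply/eqP; apply/negPn/negP => H.
have : j \in [set j | a j != b j] by rewrite inE.
by rewrite E inE.
Qed.

Lemma dH_xx k (a : word k) : dH a a = 0%N.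
Proof. by apply/eqP; rewrite /dH cards_eq0; apply/eqP/setP => j; rewrite !inE eqxx. Qed.

Lemma dH_tri k (a b z : word k) : (dH a z <= dH a b + dH b z)%N.
Proof.
rewrite /dH; apply: leq_trans (leq_card_setU _ _).
apply: subset_leq_card; apply/subsetP => j; rewrite !inE.
by case: (a j); case: (b j); case: (z j).
Qed.

Lemma lexlt_irr k (a : word k) : lexlt a a = false.
Proof. by apply/existsP => -[j]; rewrite ltnn. Qed.

Lemma lexlt_tr k (a b z : word k) : lexlt a b -> lexlt b z -> lexlt a z.
Proof.
move=> /existsP[j1 /andP[l1 /forallP H1]] /existsP[j2 /andP[l2 /forallP H2]].
apply/existsP; case: (ltngtP j1 j2) => Hj.
- exists j1; apply/andP; split.
    by move: (H2 j1); rewrite Hj /= => /eqP <-.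
  apply/forallP => j'; apply/implyP => Hj'.
  move: (H1 j') (H2 j'); rewrite Hj' (ltn_trans Hj' Hj) /= => /eqP -> //.
- exists j2; apply/andP; split.
    by move: (H1 j2); rewrite Hj /= => /eqP ->.
  apply/forallP => j'; apply/implyP => Hj'.
  move: (H1 j') (H2 j'); rewrite Hj' (ltn_trans Hj' Hj) /= => /eqP -> //.
- have E : j1 = j2 by apply: val_inj.
  subst j2; move: l1 l2; case: (a j1); case: (b j1); case: (z j1) => //.
Qed.

Lemma lexlt_tot k (a b : word k) : a != b -> lexlt a b || lexlt b a.
Proof.
move=> ab.
have [j0 Hj0] : exists j, a j != b j.
  apply/existsP; apply: contraR ab => /existsPn H; apply/eqP/ffunP => j.
  by apply/eqP; move/negPn: (H j).
case: (@arg_minnP _ j0 (fun j => a j != b j) (fun j : 'I_k => nat_of_ord j) Hj0) => j Hj Hmin.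
have Hb : forall j' : 'I_k, (j' < j)%N ==> (a j' == b j').
  move=> j'; apply/implyP => lt; apply/negPn/negP => ne.
  by have := Hmin _ ne; rewrite leqNgt lt.
move: Hj; case Ea: (a j); case Eb: (b j) => // _.
- apply/orP; right; apply/existsP; exists j; rewrite Ea Eb /=.
  by apply/forallP => j'; move: (Hb j'); case: (_ < _)%N => //= /eqP ->.
- apply/orP; left; apply/existsP; exists j; rewrite Ea Eb /=.
  by apply/forallP => j'; exact: Hb.
Qed.

Lemma Decode_spec k (C : {set word k}) z : C != set0 ->
  Decode C z \in C /\ forall w, w \in C -> (dH z (Decode C z) <= dH z w)%N.
Proof.
move=> C0; rewrite /Decode; case: pickP => [w /andP[wC /forallP H] | Hn] /=.
  split => // w' w'C; move: (H w'); rewrite w'C /= => /orP[/ltnW //|/andP[/eqP -> _]] //.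
pose lt := fun a b : word k => (dH z a < dH z b)%N || ((dH z a == dH z b) && lexlt a b).
have Htr : forall a b c, lt a b -> lt b c -> lt a c.
  move=> a b c; rewrite /lt => /orP[H1|/andP[/eqP E1 H1]] /orP[H2|/andP[/eqP E2 H2]].
  + by rewrite (ltn_trans H1 H2).
  + by rewrite -E2 H1.
  + by rewrite E1 H2.
  + by rewrite E1 E2 eqxx (lexlt_tr H1 H2) orbT.
have Htot : forall a b, a != b -> lt a b || lt b a.
  move=> a b ab; rewrite /lt; case: (ltngtP (dH z a) (dH z b)) => //= _.
  exact: lexlt_tot.
have [mm mmC Hm] := fin_min Htr Htot C0.
exfalso; move: (Hn mm); rewrite mmC /=; move/negbT/negP; apply.
apply/forallP => w'; apply/implyP => w'C.
have [->|ne] := eqVneq w' mm; first by rewrite eqxx /lexle eqxx orbT.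
move: (Hm _ w'C ne); rewrite /lt /lexle => /orP[->//|/andP[E L]].
by rewrite E L !orbT.
Qed.

Lemma card_sum (T : finType) (P : pred T) : #|[set j | P j]| = (\sum_j (P j : nat))%N.
Proof.
rewrite -sum1_card big_mkcond /=; apply: eq_bigr => j _; rewrite inE; by case: (P j).
Qed.

Section Main.
Variables (R : realFieldType) (n m c d d0 : nat) (N : 'I_m -> d.-tuple 'I_n).
Variables (C0 : {set word d}) (x y : word n).
Hypotheses (Hc : (0 < c)%N) (Hd0 : (0 < d0)%N) (Hreg : regular N c).
Hypotheses (Hlin : linear_code C0) (Hmd : min_distance C0 d0) (Hy : y \in tanner N C0).

Local Open Scope ring_scope.

Local Notation xv v := (restrict N x v).
Local Notation yv v := (restrict N y v).
Local Notation w v := (Decode C0 (xv v)).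
Local Notation e v := (dH (w v) (xv v)).
Local Notation Dv v := [set i : 'I_n | [exists j, (tnth (N v) j == i) && (w v j != x i)]].
Local Notation first v := [pick i in Dv v | [forall i' in Dv v, (i <= i')%N]].
Local Notation t := (d0%:R / 2 : R).
Local Notation act v := ((1 <= e v)%N && ((e v)%:R < t)).
Local Notation a v := ((t - (e v)%:R) / (c%:R * t)).
Local Notation p i := (\sum_(v : 'I_m | act v && (first v == Some i)) a v).
Local Notation F := (Fset x y).
Local Notation s i := (if i \in F then 1 else -1 : R).
Local Notation f v := (dH (xv v) (yv v)).
Local Notation phi v := (if act v then (if first v is Some i then s i else 0) * a v else 0 : R).

Lemma flip_eq q : DeterFlip N c t C0 x q = [ffun i => if p i == q then ~~ x i else x i].
Proof. by []. Qed.

Lemma C0ne : C0 != set0.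
Proof. by apply/set0Pn; exists (zero_word d); case: Hlin. Qed.

Lemma yvC v : yv v \in C0.
Proof. by move: Hy; rewrite inE => /forallP. Qed.

Lemma wC v : w v \in C0.
Proof. by case: (Decode_spec (xv v) C0ne). Qed.

Lemma e_le_f v : (e v <= f v)%N.
Proof.
case: (Decode_spec (xv v) C0ne) => _ H.
by rewrite dH_sym; apply: H; exact: yvC.
Qed.

Lemma distC z1 z2 : z1 \in C0 -> z2 \in C0 -> z1 != z2 -> (d0 <= dH z1 z2)%N.
Proof. by case: Hmd => _; apply. Qed.

Lemma first_in v i : first v = Some i -> i \in Dv v.
Proof. by case: pickP => // i' /andP[H _] [<-]. Qed.

Lemma first_some v : (1 <= e v)%N -> exists i, first v = Some i.
Proof.
move=> He; case: pickP => [i _|Hn]; first by exists i.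
exfalso.
have [j Hj] : exists j, w v j != xv v j.
  apply/existsP; apply: contraLR He => /existsPn H.
  have -> : w v = xv v by apply/ffunP => j; apply/eqP; move/negPn: (H j).
  by rewrite dH_xx.
have D0 : Dv v != set0.
  apply/set0Pn; exists (tnth (N v) j); rewrite inE; apply/existsP; exists j.
  by rewrite eqxx /=; move: Hj; rewrite ffunE.
have Htot : forall a b : 'I_n, a != b -> (a < b)%N || (b < a)%N.
  by move=> a b ab; rewrite -neq_ltn.
have [mm mmD Hm] := @fin_min _ (fun a b : 'I_n => (a < b)%N) (fun a b c => @ltn_trans b a c) Htot _ D0.
move: (Hn mm); rewrite mmD /= => /negbT/negP; apply.
apply/forallP => i'; apply/implyP => i'D.
have [->|ne] := eqVneq i' mm; first by [].
exact: ltnW (Hm _ i'D ne).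
Qed.

Lemma first_N v i : first v = Some i -> i \in N v.
Proof.
move/first_in; rewrite inE => /existsP[j /andP[/eqP <- _]]; exact: mem_tnth.
Qed.

Lemma t_gt0 : 0 < t.
Proof. by rewrite divr_gt0 // ltr0n. Qed.

Lemma ct_gt0 : 0 < c%:R * t.
Proof. by rewrite mulr_gt0 ?ltr0n // t_gt0. Qed.

Lemma a_ge0 v : act v -> 0 <= a v.
Proof.
case/andP => _ H; rewrite divr_ge0 ?subr_ge0 ?(ltW H) //; exact: ltW ct_gt0.
Qed.

Lemma phi_lb v : (0 < f v)%N%:R * ((t - (f v)%:R) / (c%:R * t)) <= phi v.
Proof.
have ctp := ct_gt0.
case Hf: (0 < f v)%N; last first.
  have e0 : e v = 0%N.
    by apply/eqP; rewrite -leqn0; apply: leq_trans (e_le_f v) _; rewrite leqNgt Hf.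
  by rewrite e0 /= mul0r.
rewrite mul1r.
case Ha: (act v); last first.
  have tf : t <= (f v)%:R.
    move/negbT: Ha; rewrite negb_and -ltnNge ltnS leqn0 -leNgt => /orP[/eqP e0|te].
      have wx : w v = xv v by apply: dH_eq0.
      have wy : w v != yv v.
        apply: contraTneq Hf => E; have xy : xv v = yv v by rewrite -wx.
        by rewrite xy dH_xx.
      have := distC (wC v) (yvC v) wy; rewrite wx -(ler_nat R) => H.
      apply: le_trans H; rewrite ler_pdivrMr // ler_peMr ?ler0n //.
      by rewrite (ler_nat R 1 2).
    by apply: le_trans te _; rewrite ler_nat; exact: e_le_f.
  by rewrite pmulr_lle0 ?invr_gt0 // subr_le0.
have [i Hi] := first_some (proj1 (andP Ha)).
rewrite Hi.
have ap := a_ge0 Ha.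
have [Hw|Hw] := eqVneq (w v) (yv v).
  have iF : i \in F.
    move: (first_in Hi); rewrite inE => /existsP[j /andP[/eqP Ej]].
    by rewrite Hw ffunE Ej inE eq_sym.
  by rewrite iF mul1r Hw dH_sym.
have H1 : (d0 <= e v + f v)%N.
  apply: leq_trans (distC (wC v) (yvC v) Hw) _; exact: dH_tri.
have H2 : - a v <= s i * a v.
  by case: (i \in F); rewrite ?mul1r ?mulN1r // ge0_cp.
apply: le_trans H2; rewrite -mulNr ler_pM2r ?invr_gt0 //.
rewrite -(ler_nat R) natrD in H1.
have : d0%:R = t + t by rewrite -splitr.
move=> Et; rewrite Et in H1; lra.
Qed.

Lemma f_sum v : f v = (\sum_(i in N v) (i \in F : nat))%N.
Proof.
rewrite /dH card_sum -big_uniq; last by case: Hreg.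
rewrite big_tuple; apply: eq_bigr => j _; by rewrite !ffunE inE.
Qed.

Lemma cardF : #|F| = (\sum_i (i \in F : nat))%N.
Proof. by rewrite -card_sum; apply: eq_card => i; rewrite !inE. Qed.

Lemma sum_f : (\sum_v f v = c * #|F|)%N.
Proof.
under eq_bigr => v _ do rewrite f_sum big_mkcond /=.
rewrite exchange_big /= cardF big_distrr /=; apply: eq_bigr => i _.
case: (i \in F) => /=; last by rewrite muln0; apply: big1 => v _; case: (_ \in _).
rewrite muln1; case: Hreg => _ /(_ i) <-; rewrite card_sum; apply: eq_bigr => v _.
by case: (_ \in _).
Qed.

Lemma nbhd_eq : [set v | (0 < f v)%N] = nbhd N F.
Proof.
apply/setP => v; rewrite !inE /dH card_gt0; apply/set0Pn/existsP => -[j Hj]; exists j.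
  by move: Hj; rewrite !inE !ffunE.
by rewrite !inE !ffunE; move: Hj; rewrite inE.
Qed.

Lemma Phi_eq : \sum_i s i * p i = \sum_v phi v.
Proof.
under eq_bigr => i _ do rewrite big_distrr /= big_mkcond /=.
rewrite exchange_big /=; apply: eq_bigr => v _.
case: (act v) => /=; last by apply: big1.
case E: (first v) => [i0|]; last by rewrite mul0r; apply: big1.
rewrite (bigD1 i0) //= eqxx big1 ?addr0 // => i ne.
by case: eqP => // -[] /eqP; rewrite eq_sym (negbTE ne).
Qed.

Lemma Phi_lb : (t * #|nbhd N F|%:R - (c * #|F|)%N%:R) / (c%:R * t) <= \sum_i s i * p i.
Proof.
rewrite Phi_eq; apply: le_trans (ler_sum _ (fun v _ => phi_lb v)).
rewrite -sum_f -nbhd_eq card_sum !natr_sum mulr_sumr -sumrB mulr_suml.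
rewrite le_eqVlt; apply/orP; left; apply/eqP; apply: eq_bigr => v _.
case Hf: (0 < f v)%N; first by rewrite mul1r mulr1.
have -> : f v = 0%N by apply/eqP; rewrite -leqn0 leqNgt Hf.
by rewrite /= !(mulr0, mul0r, subr0).
Qed.

Local Notation K i := (\sum_(v : 'I_m | act v && (first v == Some i)) (d0 - 2 * e v))%N.

Lemma p_K i : p i = (K i)%:R / (c * d0)%N%:R.
Proof.
rewrite natr_sum mulr_suml; apply: eq_bigr => v /andP[/andP[_ Hlt] _].
have H2 : (2 * e v <= d0)%N.
  rewrite ltr_pdivlMr ?ltr0n // -natrM ltr_nat in Hlt.
  by rewrite mulnC ltnW.
rewrite natrB // !natrM.
have c0 : c%:R != 0 :> R by rewrite pnatr_eq0 -lt0n.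
have d00 : d0%:R != 0 :> R by rewrite pnatr_eq0 -lt0n.
by field; rewrite c0 d00.
Qed.

Lemma K_le i : (K i <= c * d0)%N.
Proof.
apply: (@leq_trans (\sum_(v : 'I_m | act v && (first v == Some i)) d0)).
  by apply: leq_sum => v _; exact: leq_subr.
rewrite sum_nat_cond_const leq_mul2r; apply/orP; right.
case: Hreg => _ /(_ i) <-; apply: subset_leq_card; apply/subsetP => v.
by rewrite !inE => /andP[_ /eqP /first_N].
Qed.

Local Notation g k := (\sum_i ((K i == k)%:R * s i) : R).

Lemma Phi_K : \sum_i s i * p i = (\sum_(k < (c * d0).+1) (k : nat)%:R * g k) / (c * d0)%N%:R.
Proof.
transitivity (\sum_i s i * (K i)%:R / (c * d0)%N%:R).
  by apply: eq_bigr => i _; rewrite p_K mulrA.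
rewrite -mulr_suml; congr (_ / _).
under [RHS]eq_bigr => k _ do rewrite big_distrr /=.
rewrite exchange_big /=; apply: eq_bigr => i _.
have Hk : (K i < (c * d0).+1)%N by rewrite ltnS K_le.
pose j0 : 'I_(c * d0).+1 := Ordinal Hk.
rewrite (bigD1 j0) //= eqxx [X in _ = _ + X]big1 ?addr0; first by rewrite mul1r mulrC.
move=> k ne; have -> : (K i == k) = false.
  by apply/negbTE; apply: contra ne => /eqP E; apply/eqP/val_inj.
by rewrite mul0r mulr0.
Qed.

Lemma flip_card k : (0 < c * d0)%N ->
  #|Fset (DeterFlip N c t C0 x (k%:R / (c * d0)%N%:R)) y|%:R = #|F|%:R - g k.
Proof.
move=> M0; rewrite flip_eq cardF /Fset card_sum !natr_sum -sumrB.
apply: eq_bigr => i _; rewrite ffunE p_K.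
have M0' : (c * d0)%N%:R != 0 :> R by rewrite pnatr_eq0 -lt0n.
rewrite (inj_eq (can_inj (divfK M0'))) eqr_nat.
rewrite !inE; case: (K i == k); case: (x i); case: (y i) => /=.
all: rewrite ?mul1r ?mul0r ?subr0 ?subrr ?opprK //.
all: try lra.
Qed.

Lemma main_sec (alpha delta : R) : expander N c alpha delta -> 2 < d0%:R * delta ->
  (dH x y)%:R <= alpha * n%:R ->
  exists k : nat, (1 <= k <= c * d0)%N /\
   #|Fset (DeterFlip N c t C0 x (k%:R / (c * d0)%N%:R)) y|%:R
     <= (1 - (d0%:R / 2 - delta^-1) * delta / (2 * c%:R * t ^+ 2)) * #|F|%:R.
Proof.
move=> [_ _ /andP[dp _] Hexp] Hd Hdist.
set kap := (d0%:R / 2 - delta^-1) * delta / (2 * c%:R * t ^+ 2).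
have M0 : (0 < c * d0)%N by rewrite muln_gt0 Hc.
have c0 : c%:R != 0 :> R by rewrite pnatr_eq0 -lt0n.
have d00 : d0%:R != 0 :> R by rewrite pnatr_eq0 -lt0n.
have dl0 : delta != 0 by rewrite gt_eqF.
have Hnb := Hexp _ Hdist.
have kapE : kap = (d0%:R * delta - 2) / (c%:R * d0%:R ^+ 2).
  by rewrite /kap; field; rewrite c0 d00 dl0.
have kap0 : 0 <= kap.
  rewrite kapE divr_ge0 // ?subr_ge0 ?(ltW Hd) //.
  by rewrite mulr_ge0 ?ler0n // exprn_ge0 ?ler0n.
have PhiL : (c * d0)%N%:R * kap * #|F|%:R <= \sum_i s i * p i.
  apply: le_trans Phi_lb.
  apply: (@le_trans _ _ ((t * (delta * c%:R * #|F|%:R) - (c * #|F|)%N%:R) / (c%:R * t))).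
    rewrite le_eqVlt; apply/orP; left; apply/eqP.
    by rewrite kapE !natrM; field; rewrite c0 d00.
  by rewrite ler_pM2r ?invr_gt0 ?ct_gt0 // lerD2r ler_pM2l ?t_gt0.
have Fc0 : 0 <= #|F|%:R :> R by rewrite ler0n.
case: (boolP [exists k : 'I_(c * d0).+1, (0 < k)%N && (kap * #|F|%:R <= g k)]).
  case/existsP => k /andP[k0 Hk]; exists k; split.
    by rewrite k0 -ltnS ltn_ord.
  rewrite flip_card //; nra.
move/existsPn => Hall; exfalso.
have Hlt : forall k : 'I_(c * d0).+1, (0 < k)%N -> g k < kap * #|F|%:R.
  by move=> k k0; move: (Hall k); rewrite k0 /= ltNge.
have Mr0 : 0 < (c * d0)%N%:R :> R by rewrite ltr0n.
have : \sum_(k < (c * d0).+1) (k : nat)%:R * g k < (c * d0)%N%:R * ((c * d0)%N%:R * kap * #|F|%:R).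
  rewrite big_ord_recl /= mul0r add0r.
  apply: (@lt_le_trans _ _ (\sum_(k < c * d0) (c * d0)%N%:R * kap * #|F|%:R)).
    apply: ltr_sum.
      by apply/hasP; exists (Ordinal M0); rewrite ?mem_index_enum.
    move=> k _; have := Hlt (lift ord0 k) isT.
    have Hk1 : (bump 0 k <= c * d0)%N by rewrite /bump /= add1n ltn_ord.
    move: Hk1; rewrite -(ler_nat R) => Hk1.
    have Hk0 : 1 <= (bump 0 k)%:R :> R by rewrite /bump /= add1n (ler_nat R 1).
    move: (g (lift ord0 k)) => G HG.
    case: (leP 0 G) => HG0.
      apply: (@le_lt_trans _ _ ((c * d0)%N%:R * G)); first exact: ler_wpM2r.
      by rewrite -mulrA ltr_pM2l.
    apply: (@lt_le_trans _ _ 0).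
      by rewrite pmulr_rlt0 // (lt_le_trans ltr01 Hk0).
    by rewrite mulr_ge0 // mulr_ge0 // ltW.
  by rewrite sumr_const card_ord [X in _ <= X]mulr_natl.
move=> HS; have := PhiL; rewrite Phi_K ler_pdivlMr // mulrC => H.
by have := le_lt_trans H HS; rewrite ltxx.
Qed.

End Main.

Local Open Scope ring_scope.

Theorem corollary4p2 (R : realFieldType) (n m c d d0 : nat) (alpha delta : R)
    (N : 'I_m -> d.-tuple 'I_n) (C0 : {set word d}) (x y : word n) :
  (0 < c)%N ->
  expander N c alpha delta ->
  linear_code C0 -> min_distance C0 d0 ->
  2 < d0%:R * delta ->
  y \in tanner N C0 ->
  (dH x y)%:R <= alpha * n%:R ->
  let eps0 : R := d0%:R / 2 - delta^-1 in
  let t : R := d0%:R / 2 in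
  exists q : R,
    (exists i : nat, (1 <= i <= c * d0)%N /\ q = i%:R / (c * d0)%:R) /\
    #|Fset (DeterFlip N c t C0 x q) y|%:R
      <= (1 - eps0 * delta / (2 * c%:R * t ^+ 2)) * #|Fset x y|%:R.
Proof.
move=> Hc Hexp Hlin Hmd Hd Hy Hdist eps0 t.
have Hd0 : (0 < d0)%N.
  rewrite lt0n; apply/negP => /eqP E; move: Hd; rewrite E mul0r.
  by rewrite ltNge ler0n.
have Hreg : regular N c by case: Hexp.
have [k [Hk H]] := main_sec Hc Hd0 Hreg Hlin Hmd Hy Hexp Hd Hdist.
exists (k%:R / (c * d0)%:R); split; first by exists k.
exact: H.
Qed.
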